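(* Let $\mathcal{X}$ be a finite set, $\pi$ a probability mass function on $\mathcal{X}$ with full support, and let a group $\mathcal{G}$ act on $\mathcal{X}$ with orbits $(\mathcal{O}_i)_{i=1}^k$ and Gibbs, Metropolis–Hastings and Barker orbit kernels $G$, $M$, $B$. Let $\mathbf{G}=\{Q\in\mathcal{S}(\pi):GQG=Q\}$. For every $P\in\mathcal{S}(\pi)$ and $Q\in\mathbf{G}$, $$D^\pi_{KL}(P\|Q)=D^\pi_{KL}(P\|GPG)+D^\pi_{KL}(GPG\|Q).$$ In particular $GPG$ is the unique projection of $P$ onto $\mathbf{G}$ under KL divergence: $D^\pi_{KL}(P\|GPG)=\min_{Q\in\mathbf{G}}D^\pi_{KL}(P\|Q)$. Moreover, for all $Q\in\mathbf{G}$, $D^\pi_{KL}(MPM\|Q)=D^\pi_{KL}(MPM\|GPG)+D^\pi_{KL}(GPG\|Q)$ and $D^\pi_{KL}(BPB\|Q)=D^\pi_{KL}(BPB\|GPG)+D^\pi_{KL}(GPG\|Q)$, so $GPG$ is also the unique KL projection of $MPM$ and of $BPB$ onto $\mathbf{G}$. Taking $Q=\Pi$: $D^\pi_{KL}(P\|\Pi)\ge D^\pi_{KL}(GPG\|\Pi)$, $D^\pi_{KL}(MPM\|\Pi)\ge D^\pi_{KL}(GPG\|\Pi)$ and $D^\pi_{KL}(BPB\|\Pi)\ge D^\pi_{KL}(GPG\|\Pi)$.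
   Context: $\mathcal{S}(\pi)$ is the set of transition matrices $P$ with $\pi P=\pi$; $\Pi$ is the matrix all of whose rows equal $\pi$. For transition matrices $P,Q$, $D^\pi_{KL}(P\|Q)=\sum_{x,y}\pi(x)P(x,y)\log\frac{P(x,y)}{Q(x,y)}$ with convention $0\log(0/a)=0$. With $\mathcal{O}(x)$ the orbit of $x$: $G(x,y)=\pi(y)/\pi(\mathcal{O}(x))$ for $y\in\mathcal{O}(x)$, else $0$; $M(x,y)=\frac{1}{|\mathcal{O}(x)|-1}\min\{1,\pi(y)/\pi(x)\}$ for $y\in\mathcal{O}(x)\setminus\{x\}$, $0$ off the orbit, $M(x,x)=1-\sum_{y\ne x}M(x,y)$; $B$ is the same with acceptance $\pi(y)/(\pi(x)+\pi(y))$. *)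

(* Defs.v *)
From HB Require Import structures.
From mathcomp Require Import all_boot all_order all_algebra all_fingroup.
From mathcomp Require Import reals ereal exp.
Set Implicit Arguments. Unset Strict Implicit. Unset Printing Implicit Defensive.
Import Order.TTheory GRing.Theory Num.Theory.
Local Open Scope ring_scope.

Definition kmul (R : realType) (X : finType) (P Q : X -> X -> R) : X -> X -> R :=
  fun x y => \sum_(z : X) P x z * Q z y.

Definition is_transition (R : realType) (X : finType) (P : X -> X -> R) : Prop :=
  (forall x y, 0 <= P x y) /\ (forall x, \sum_(y : X) P x y = 1).

Definition in_S (R : realType) (X : finType) (pi : X -> R) (P : X -> X -> R) : Prop :=
  is_transition P /\ (forall y, \sum_(x : X) pi x * P x y = pi y).

Definition PiK (R : realType) (X : finType) (pi : X -> R) : X -> X -> R :=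
  fun _ y => pi y.

(* pointwise term of the KL divergence; convention 0 log(0/a) = 0, and
   a positive entry against a zero entry contributes +oo *)
Definition kl_term (R : realType) (p q w : R) : \bar R :=
  if p == 0 then 0%E
  else if q == 0 then +oo%E
  else (w * p * ln (p / q))%:E.

Definition KL (R : realType) (X : finType) (pi : X -> R) (P Q : X -> X -> R) : \bar R :=
  (\sum_(x : X) \sum_(y : X) kl_term (P x y) (Q x y) (pi x))%E.

Definition pimass (R : realType) (X : finType) (pi : X -> R) (A : {set X}) : R :=
  \sum_(y in A) pi y.

(* Orbit kernels, for an orbit map O : X -> {set X} (O x = orbit of x). *)
Definition GibbsK (R : realType) (X : finType) (pi : X -> R) (O : X -> {set X})
  : X -> X -> R :=
  fun x y => if y \in O x then pi y / pimass pi (O x) else 0.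

Definition orbit_off (R : realType) (X : finType) (acc : X -> X -> R)
  (O : X -> {set X}) (x y : X) : R :=
  if (y \in O x) && (y != x) then (#|O x|.-1)%:R^-1 * acc x y else 0.

Definition orbitK (R : realType) (X : finType) (acc : X -> X -> R)
  (O : X -> {set X}) : X -> X -> R :=
  fun x y => if y == x then 1 - \sum_(z : X | z != x) orbit_off acc O x z
             else orbit_off acc O x y.

Definition MHK (R : realType) (X : finType) (pi : X -> R) (O : X -> {set X}) :=
  orbitK (fun x y => Num.min 1 (pi y / pi x)) O.

Definition BarkerK (R : realType) (X : finType) (pi : X -> R) (O : X -> {set X}) :=
  orbitK (fun x y => pi y / (pi x + pi y)) O.

Definition in_boldG (R : realType) (X : finType) (pi : X -> R) (O : X -> {set X})
  (Q : X -> X -> R) : Prop :=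
  in_S pi Q /\ (forall x y, kmul (kmul (GibbsK pi O) Q) (GibbsK pi O) x y = Q x y).

Definition sandwich (R : realType) (X : finType) (K P : X -> X -> R) : X -> X -> R :=
  kmul (kmul K P) K.

(* Main.v *)
Require Import Defs.
From HB Require Import structures.
From mathcomp Require Import all_boot all_order all_algebra all_fingroup.
From mathcomp Require Import reals ereal exp.
From mathcomp Require Import ring lra.
From Stdlib Require Import FunctionalExtensionality.
Import Order.TTheory GRing.Theory Num.Theory.
Local Open Scope ring_scope.
Set Implicit Arguments. Unset Strict Implicit.

Lemma kmulA (R : realType) (X : finType) (A B C : X -> X -> R) :
  kmul (kmul A B) C = kmul A (kmul B C).
Proof.
apply: functional_extensionality => x; apply: functional_extensionality => y.
rewrite /kmul; under eq_bigr do rewrite mulr_suml.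
rewrite exchange_big; apply: eq_bigr => w _; rewrite mulr_sumr.
by apply: eq_bigr => z _; rewrite mulrA.
Qed.

Lemma kmul_ge0 (R : realType) (X : finType) (A B : X -> X -> R) :
  (forall x y, 0 <= A x y) -> (forall x y, 0 <= B x y) ->
  forall x y, 0 <= kmul A B x y.
Proof. by move=> hA hB x y; apply: sumr_ge0 => z _; apply: mulr_ge0. Qed.

Lemma kmul_row (R : realType) (X : finType) (A B : X -> X -> R) :
  (forall x, \sum_y A x y = 1) -> (forall x, \sum_y B x y = 1) ->
  forall x, \sum_y kmul A B x y = 1.
Proof.
move=> hA hB x; rewrite /kmul exchange_big /= -[RHS](hA x).
by apply: eq_bigr => z _; rewrite -mulr_sumr hB mulr1.
Qed.

Lemma kmul_stat (R : realType) (X : finType) (pi : X -> R) (A B : X -> X -> R) :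
  (forall y, \sum_x pi x * A x y = pi y) -> (forall y, \sum_x pi x * B x y = pi y) ->
  forall y, \sum_x pi x * kmul A B x y = pi y.
Proof.
move=> hA hB y; rewrite /kmul; under eq_bigr do rewrite mulr_sumr.
rewrite exchange_big /= -[RHS](hB y); apply: eq_bigr => z _.
by rewrite -(hA z) mulr_suml; apply: eq_bigr => x _; rewrite mulrA.
Qed.

Section Blocks.
Variables (R : realType) (X : finType) (pi : X -> R) (O : X -> {set X}).
Hypotheses (hpos : forall x, 0 < pi x) (Orefl : forall x, x \in O x)
  (Oeq : forall {x y}, y \in O x -> O y = O x).

Local Notation G := (GibbsK pi O).

Lemma Osym x y : (y \in O x) = (x \in O y).
Proof.
by apply/idP/idP => h; rewrite (Oeq h) Orefl.
Qed.

Lemma pimass_gt0 x : 0 < pimass pi (O x).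
Proof.
rewrite /pimass (bigD1 x) ?Orefl //=.
apply: (lt_le_trans (hpos x)); rewrite lerDl; apply: sumr_ge0 => z _.
exact: ltW.
Qed.

Lemma G_ge0 x y : 0 <= G x y.
Proof.
rewrite /GibbsK; case: ifP => _ //.
by apply: divr_ge0; [exact: ltW | exact: ltW (pimass_gt0 x)].
Qed.

Lemma G_row x : \sum_y G x y = 1.
Proof.
rewrite /GibbsK -big_mkcond /= -mulr_suml -/(pimass pi (O x)).
by rewrite mulfV // gt_eqF // pimass_gt0.
Qed.

Lemma G_supp x y : G x y != 0 -> y \in O x.
Proof. by rewrite /GibbsK; case: ifP => // _; rewrite eqxx. Qed.

Lemma G_O x x' : x' \in O x -> G x' = G x.
Proof.
move=> h; apply: functional_extensionality => y; by rewrite /GibbsK (Oeq h).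
Qed.

Lemma G_stat y : \sum_x pi x * G x y = pi y.
Proof.
transitivity (\sum_x (if x \in O y then pi x * (pi y / pimass pi (O y)) else 0)).
  apply: eq_bigr => x _; rewrite /GibbsK Osym; case: ifP => h.
    by rewrite (Oeq h).
  by rewrite mulr0.
rewrite -big_mkcond /= -mulr_suml -/(pimass pi (O y)).
have := pimass_gt0 y; set m := pimass _ _ => hm.
by rewrite mulrC -mulrA mulVf ?mulr1 // gt_eqF.
Qed.

Lemma GG : kmul G G = G.
Proof.
apply: functional_extensionality => x; apply: functional_extensionality => y.
rewrite /kmul (eq_bigr (fun z => G x z * G x y)).
  by rewrite -mulr_suml G_row mul1r.
move=> z _; have [h|h] := eqVneq (G x z) 0; first by rewrite h !mul0r.
by rewrite (G_O (G_supp h)).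
Qed.


Definition binv (f : X -> X -> R) :=
  (forall x x' y, x' \in O x -> f x' y = f x y) /\
  (forall x y y', y' \in O y -> f x y' = f x y).

Lemma aggR (A : X -> X -> R) f : binv f ->
  \sum_x \sum_y pi x * kmul A G x y * f x y =
  \sum_x \sum_y pi x * A x y * f x y.
Proof.
move=> [_ hf]; apply: eq_bigr => x _; rewrite /kmul.
under eq_bigr do rewrite mulr_sumr mulr_suml.
rewrite exchange_big /=; apply: eq_bigr => z _.
rewrite (eq_bigr (fun y => pi x * A x z * f x z * G z y)).
  by rewrite -mulr_sumr G_row mulr1.
move=> y _; have [h|h] := eqVneq (G z y) 0; first by rewrite h !(mul0r, mulr0).
by rewrite (hf _ _ _ (G_supp h)); rewrite -!mulrA; congr (_ * (_ * _)); rewrite mulrC.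
Qed.

Lemma aggL (A : X -> X -> R) f : binv f ->
  \sum_x \sum_y pi x * kmul G A x y * f x y =
  \sum_x \sum_y pi x * A x y * f x y.
Proof.
move=> [hf _]; rewrite /kmul.
under eq_bigr do under eq_bigr do rewrite mulr_sumr mulr_suml.
under eq_bigr do rewrite exchange_big.
rewrite exchange_big /=; apply: eq_bigr => w _.
rewrite exchange_big /=; apply: eq_bigr => y _.
rewrite (eq_bigr (fun x => pi x * G x w * (A w y * f w y))).
  by rewrite -mulr_suml G_stat mulrA.
move=> x _; have [h|h] := eqVneq (G x w) 0; first by rewrite h !(mul0r, mulr0).
by rewrite (hf _ _ _ (G_supp h)) !mulrA.
Qed.

Lemma agg (A : X -> X -> R) f : binv f ->
  \sum_x \sum_y pi x * sandwich G A x y * f x y =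
  \sum_x \sum_y pi x * A x y * f x y.
Proof. by move=> hf; rewrite /sandwich aggR // aggL. Qed.

Definition bstruct (T : X -> X -> R) :=
  (forall x x' y, x' \in O x -> T x' y = T x y) /\
  (forall x y y', y' \in O y -> T x y' * pi y = T x y * pi y').

Lemma sandwich_bstruct A : bstruct (sandwich G A).
Proof.
split.
  by move=> x x' y h; rewrite /sandwich /kmul (G_O h).
move=> x y y' h; rewrite /sandwich /kmul !mulr_suml; apply: eq_bigr => z _.
rewrite -!mulrA; congr (_ * _); rewrite /GibbsK.
have -> : (y' \in O z) = (y \in O z) by rewrite Osym (Oeq h) -Osym.
case: ifP => _; last by rewrite !mul0r.
by rewrite mulrAC [RHS]mulrAC (mulrC (pi y)).
Qed.

Lemma bstruct_zero T : bstruct T -> forall x y y', y' \in O y ->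
  (T x y' == 0) = (T x y == 0).
Proof.
move=> [_ hT] x y y' h.
have hy : pi y != 0 by rewrite gt_eqF.
have hy' : pi y' != 0 by rewrite gt_eqF.
have e1 : (T x y' == 0) = (T x y' * pi y == 0) by rewrite mulf_eq0 (negbTE hy) orbF.
by rewrite e1 (hT _ _ _ h) mulf_eq0 (negbTE hy') orbF.
Qed.

Lemma bstruct_zerox T : bstruct T -> forall x x' y, x' \in O x ->
  (T x' y == 0) = (T x y == 0).
Proof. by move=> [hT _] x x' y h; rewrite (hT _ _ _ h). Qed.

End Blocks.

Section KLs.
Variables (R : realType) (X : finType) (pi : X -> R).
Hypothesis hpos : forall x, 0 < pi x.

Definition klr (A B : X -> X -> R) : R :=
  \sum_x \sum_y (if A x y == 0 then 0 else pi x * A x y * ln (A x y / B x y)).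

Definition mass (A : X -> X -> R) : R := \sum_x \sum_y pi x * A x y.

Lemma KL_fin (A B : X -> X -> R) : (forall x y, A x y != 0 -> B x y != 0) ->
  KL pi A B = (klr A B)%:E.
Proof.
move=> hAB; rewrite /KL /klr -sumEFin; apply: eq_bigr => x _.
rewrite -sumEFin; apply: eq_bigr => y _; rewrite /kl_term.
have [hA|hA] := eqVneq (A x y) 0; first by [].
by rewrite (negbTE (hAB x y hA)).
Qed.

Lemma kl_term_Nny (p q w : R) : kl_term p q w != -oo%E.
Proof. by rewrite /kl_term; case: ifP => _ //; case: ifP. Qed.

Lemma sum_Nny (P : pred X) (F : X -> \bar R) : (forall i, F i != -oo%E) -> (\sum_(i | P i) F i != -oo)%E.
Proof.
move=> hF; apply: (big_ind (fun e : \bar R => e != -oo%E)) => //.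
by move=> a b ha hb; rewrite adde_eq_ninfty negb_or ha hb.
Qed.

Lemma KL_inf (A B : X -> X -> R) x0 y0 : A x0 y0 != 0 -> B x0 y0 = 0 -> KL pi A B = +oo%E.
Proof.
move=> hA hB; rewrite /KL (bigD1 x0) //= (bigD1 y0) //= {1}/kl_term.
rewrite (negbTE hA) hB eqxx addye ?addye //.
  by apply: sum_Nny => x; apply: sum_Nny => y; exact: kl_term_Nny.
by apply: sum_Nny => y; exact: kl_term_Nny.
Qed.

Lemma ln_le_sub1 (u : R) : 0 < u -> ln u <= u - 1.
Proof.
move=> hu; have := @le_ln1Dx R (u - 1).
by rewrite [1 + _]addrC subrK; apply; rewrite ltrBrDr addrC subrr.
Qed.

Lemma ln_lt_sub1 (u : R) : 0 < u -> u != 1 -> ln u < u - 1.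
Proof.
move=> hu hu1; have h : u - 1 != 0 by rewrite subr_eq0.
have := expR_gt1Dx h; rewrite [1 + _]addrC subrK => hlt.
rewrite -[X in _ < X]expRK ltr_ln //; rewrite posrE ?expR_gt0 //.
Qed.

Lemma key_le (a b : R) : 0 < a -> 0 < b -> a - b <= a * ln (a / b).
Proof.
move=> ha hb; have hba : 0 < b / a by apply: divr_gt0.
have e : ln (a / b) = - ln (b / a).
  by rewrite -lnV ?posrE // invf_div.
rewrite e mulrN -lerNr opprB; have := ln_le_sub1 hba => hl.
apply: (le_trans (ler_wpM2l (ltW ha) hl)).
by rewrite mulrBr mulr1 mulrCA mulfV ?gt_eqF // mulr1.
Qed.

Lemma key_lt (a b : R) : 0 < a -> 0 < b -> a != b -> a - b < a * ln (a / b).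
Proof.
move=> ha hb hab; have hba : 0 < b / a by apply: divr_gt0.
have e : ln (a / b) = - ln (b / a).
  by rewrite -lnV ?posrE // invf_div.
have hba1 : b / a != 1.
  apply: contra hab => /eqP h; apply/eqP.
  have ha0 : a != 0 by rewrite gt_eqF.
  by rewrite -[b](divfK ha0) h mul1r.
rewrite e mulrN -ltrNr opprB; have := ln_lt_sub1 hba hba1 => hl.
apply: (@lt_le_trans _ _ (a * (b / a - 1))); first by rewrite ltr_pM2l.
by rewrite mulrBr mulr1 mulrCA mulfV ?gt_eqF // mulr1.
Qed.


Definition kterm (A B : X -> X -> R) x y :=
  if A x y == 0 then 0 else pi x * A x y * ln (A x y / B x y).

Lemma kterm_ge (A B : X -> X -> R) x y : 0 <= A x y -> 0 <= B x y ->
  (A x y != 0 -> B x y != 0) -> pi x * A x y - pi x * B x y <= kterm A B x y.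
Proof.
move=> hA hB hAB; rewrite /kterm.
have [h0|h0] := eqVneq (A x y) 0.
  by rewrite h0 mulr0 sub0r oppr_le0 mulr_ge0 // ltW.
have hA' : 0 < A x y by rewrite lt_def h0.
have hB' : 0 < B x y by rewrite lt_def hAB.
rewrite -mulrBr -mulrA; apply: ler_wpM2l; [exact: ltW | exact: key_le].
Qed.

Lemma kterm_gt (A B : X -> X -> R) x y : 0 < A x y -> 0 < B x y ->
  A x y != B x y -> pi x * A x y - pi x * B x y < kterm A B x y.
Proof.
move=> hA hB hAB; rewrite /kterm gt_eqF //.
by rewrite -mulrBr -mulrA ltr_pM2l //; apply: key_lt.
Qed.

Lemma klr_ge (A B : X -> X -> R) : (forall x y, 0 <= A x y) -> (forall x y, 0 <= B x y) ->
  (forall x y, A x y != 0 -> B x y != 0) -> mass A - mass B <= klr A B.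
Proof.
move=> hA hB hAB; rewrite /mass /klr -sumrB; apply: ler_sum => x _.
rewrite -sumrB; apply: ler_sum => y _; exact: kterm_ge (hA x y) (hB x y) (hAB x y).
Qed.

Lemma klr_eq0 (A B : X -> X -> R) : (forall x y, 0 <= A x y) -> (forall x y, 0 <= B x y) ->
  (forall x y, A x y != 0 -> B x y != 0) -> mass A = mass B -> klr A B = 0 ->
  forall x y, B x y = A x y.
Proof.
move=> hA hB hAB hm hk.
pose d x y := kterm A B x y - (pi x * A x y - pi x * B x y).
have hd : forall x y, 0 <= d x y by move=> x y; rewrite subr_ge0 (kterm_ge (hA x y) (hB x y) (hAB x y)).
have hs : \sum_x \sum_y d x y = 0.
  rewrite /d; under eq_bigr do rewrite sumrB.
  rewrite sumrB.
  have -> : \sum_x \sum_y (pi x * A x y - pi x * B x y) = mass A - mass B.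
    by rewrite /mass -sumrB; apply: eq_bigr => x _; rewrite sumrB.
  by rewrite hm subrr subr0; exact: hk.
move=> x y.
have hrow : \sum_y d x y = 0.
  apply: (psumr_eq0P (P := predT) (F := fun x => \sum_y d x y)) => //.
  by move=> i _; apply: sumr_ge0 => j _.
have hxy : d x y = 0.
  by apply: (psumr_eq0P (P := predT) (F := fun y => d x y)).
have [h0|h0] := eqVneq (A x y) 0.
  move: hxy; rewrite /d /kterm h0 eqxx mulr0 !sub0r opprK => /eqP.
  by rewrite mulf_eq0 gt_eqF //= => /eqP.
have hA' : 0 < A x y by rewrite lt_def h0 hA.
have hB' : 0 < B x y by rewrite lt_def hAB ?hB.
apply/eqP; rewrite eq_sym; apply/negPn/negP => hne.
have := kterm_gt hA' hB' hne; rewrite -subr_gt0 -/(d x y) hxy ltxx.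
by [].
Qed.

End KLs.

Lemma sum_ge_term (R : realType) (X : finType) (F : X -> R) i :
  (forall j, 0 <= F j) -> F i <= \sum_j F j.
Proof. by move=> hF; rewrite (bigD1 i) //= lerDl sumr_ge0. Qed.

Section Core.
Variables (R : realType) (X : finType) (pi : X -> R) (O : X -> {set X}).
Hypotheses (hpos : forall x, 0 < pi x) (Orefl : forall x, x \in O x)
  (Oeq : forall {x y}, y \in O x -> O y = O x).
Local Notation G := (GibbsK pi O).
Variables (S T Q : X -> X -> R).
Hypotheses (S_ge0 : forall x y, 0 <= S x y)
  (hT : forall x y, sandwich G S x y = T x y)
  (Q_ge0 : forall x y, 0 <= Q x y)
  (hQ : forall x y, sandwich G Q x y = Q x y)
  (mT : mass pi T = 1) (mQ : mass pi Q = 1).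

Lemma eT : T = sandwich G S.
Proof.
by apply: functional_extensionality => x; apply: functional_extensionality => y; rewrite hT.
Qed.

Lemma eQ : Q = sandwich G Q.
Proof.
by apply: functional_extensionality => x; apply: functional_extensionality => y; rewrite hQ.
Qed.

Lemma bT : bstruct pi O T.
Proof. rewrite eT; exact: sandwich_bstruct. Qed.

Lemma bQ : bstruct pi O Q.
Proof. rewrite eQ; exact: sandwich_bstruct. Qed.

Lemma T_ge0 x y : 0 <= T x y.
Proof.
rewrite -hT; apply: kmul_ge0; last exact: G_ge0.
  apply: kmul_ge0 => //; exact: G_ge0.
Qed.

Lemma G_diag x : 0 < G x x.
Proof.
rewrite /GibbsK Orefl; apply: divr_gt0 => //; exact: pimass_gt0.
Qed.

Lemma T_supp x y : S x y != 0 -> T x y != 0.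
Proof.
move=> hS; have hS' : 0 < S x y by rewrite lt_def hS S_ge0.
rewrite gt_eqF // -hT /sandwich /kmul.
apply: (lt_le_trans _ (sum_ge_term y _)); last first.
  move=> j; apply: mulr_ge0; last exact: G_ge0.
  by apply: sumr_ge0 => w _; apply: mulr_ge0 => //; exact: G_ge0.
apply: mulr_gt0; last exact: G_diag.
apply: (lt_le_trans _ (sum_ge_term x _)); last first.
  by move=> j; apply: mulr_ge0 => //; exact: G_ge0.
by apply: mulr_gt0 => //; exact: G_diag.
Qed.

Lemma c2c1 x0 y0 : T x0 y0 != 0 -> Q x0 y0 = 0 ->
  exists x y, S x y != 0 /\ Q x y = 0.
Proof.
move=> hT0 hQ0.
case: (boolP [exists x, [exists y, (S x y != 0) && (Q x y == 0)]]).
  by move=> /existsP[x /existsP[y /andP[h1 /eqP h2]]]; exists x, y.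
move=> hn; exfalso.
have hSQ : forall x y, S x y != 0 -> Q x y != 0.
  move=> x y h1; apply/negP => h2; move/negP: hn; apply.
  by apply/existsP; exists x; apply/existsP; exists y; rewrite h1.
pose f x y := (Q x y == 0)%:R : R.
have hf : binv O f.
  split.
    by move=> x x' y h; rewrite /f (bstruct_zerox bQ _ h).
  by move=> x y y' h; rewrite /f (bstruct_zero hpos bQ _ h).
have := agg hpos Orefl (@Oeq) S hf.
have -> : \sum_x \sum_y pi x * S x y * f x y = 0.
  apply: big1 => x _; apply: big1 => y _; rewrite /f.
  have [h|h] := eqVneq (S x y) 0; first by rewrite h mulr0 mul0r.
  by rewrite (negbTE (hSQ x y h)) mulr0.
under eq_bigr do under eq_bigr do rewrite hT.
move=> hsum.
have hge : forall x y, 0 <= pi x * T x y * f x y.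
  move=> x y; apply: mulr_ge0; first apply: mulr_ge0; [exact: ltW | exact: T_ge0 |].
  by rewrite /f; case: (_ == _).
have hrow : \sum_y pi x0 * T x0 y * f x0 y = 0.
  apply: (psumr_eq0P (P := predT) (F := fun x => \sum_y pi x * T x y * f x y)) => //.
  by move=> i _; apply: sumr_ge0.
have : pi x0 * T x0 y0 * f x0 y0 = 0.
  by apply: (psumr_eq0P (P := predT) (F := fun y => pi x0 * T x0 y * f x0 y)).
rewrite /f hQ0 eqxx mulr1 => /eqP; rewrite mulf_eq0 (negbTE hT0) orbF.
by rewrite gt_eqF.
Qed.


Definition c2b := [exists x, [exists y, (T x y != 0) && (Q x y == 0)]].

Lemma KL_ST : KL pi S T = (klr pi S T)%:E.
Proof. apply: KL_fin => x y; exact: T_supp. Qed.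

Lemma not_c2 : ~~ c2b -> forall x y, T x y != 0 -> Q x y != 0.
Proof.
move=> hn x y h1; apply/negP => h2; move/negP: hn; apply.
by apply/existsP; exists x; apply/existsP; exists y; rewrite h1.
Qed.

Lemma klr_pyth : ~~ c2b -> klr pi S Q = klr pi S T + klr pi T Q.
Proof.
move=> /not_c2 hTQ.
pose g x y := if T x y == 0 then 0 else ln (T x y / Q x y).
have hg : binv O g.
  split.
    by move=> x x' y h; rewrite /g (bT.1 _ _ _ h) (bQ.1 _ _ _ h).
  move=> x y y' h; rewrite /g (bstruct_zero hpos bT _ h).
  have [h0|h0] := eqVneq (T x y) 0; first by [].
  have hq := hTQ _ _ h0.
  have hy : pi y != 0 by rewrite gt_eqF.
  have hy' : pi y' != 0 by rewrite gt_eqF.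
  have e1 : T x y' = T x y * pi y' / pi y by rewrite -(bT.2 _ _ _ h) mulfK.
  have e2 : Q x y' = Q x y * pi y' / pi y by rewrite -(bQ.2 _ _ _ h) mulfK.
  by rewrite e1 e2; congr (ln _); field; rewrite hq hy hy'.
have step1 : klr pi S Q = klr pi S T + \sum_x \sum_y pi x * S x y * g x y.
  rewrite /klr -big_split; apply: eq_bigr => x _; rewrite -big_split.
  apply: eq_bigr => y _ /=.
  have [h0|h0] := eqVneq (S x y) 0; first by rewrite h0 mulr0 mul0r addr0.
  have hT0 := T_supp h0; have hQ0 := hTQ _ _ hT0.
  have hSp : 0 < S x y by rewrite lt_def h0 S_ge0.
  have hTp : 0 < T x y by rewrite lt_def hT0 T_ge0.
  have hQp : 0 < Q x y by rewrite lt_def hQ0 Q_ge0.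
  rewrite /g (negbTE hT0) -mulrDr !ln_div ?posrE //.
  by rewrite addrA subrK.
have step2 : \sum_x \sum_y pi x * S x y * g x y = \sum_x \sum_y pi x * T x y * g x y.
  rewrite -(agg hpos Orefl (@Oeq) S hg).
  by apply: eq_bigr => x _; apply: eq_bigr => y _; rewrite hT.
have step3 : \sum_x \sum_y pi x * T x y * g x y = klr pi T Q.
  rewrite /klr; apply: eq_bigr => x _; apply: eq_bigr => y _; rewrite /g.
  by case: (_ == _) => //; rewrite mulr0.
by rewrite step1 step2 step3.
Qed.

Lemma pyth : KL pi S Q = (KL pi S T + KL pi T Q)%E.
Proof.
rewrite KL_ST; case: (boolP c2b) => hc.
  move: hc => /existsP[x0 /existsP[y0 /andP[h1 /eqP h2]]].
  have [x [y [h3 h4]]] := c2c1 h1 h2.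
  by rewrite (KL_inf pi h1 h2) (KL_inf pi h3 h4) addey.
have hTQ := not_c2 hc.
rewrite (KL_fin pi hTQ) (KL_fin pi (A := S)); last first.
  by move=> x y h; apply: hTQ; exact: T_supp.
by rewrite -EFinD klr_pyth.
Qed.

Lemma KL_TQ_ge0 : (0 <= KL pi T Q)%E.
Proof.
case: (boolP c2b) => hc.
  move: hc => /existsP[x0 /existsP[y0 /andP[h1 /eqP h2]]].
  by rewrite (KL_inf pi h1 h2) leey.
rewrite (KL_fin pi (not_c2 hc)) lee_fin.
apply: le_trans (klr_ge hpos T_ge0 Q_ge0 (not_c2 hc)).
by rewrite mT mQ subrr.
Qed.

Lemma massST : mass pi S = mass pi T.
Proof.
have hc : binv O (fun _ _ => 1 : R) by split.
have := agg hpos Orefl (@Oeq) S hc.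
under eq_bigr do under eq_bigr do rewrite mulr1.
under [X in _ = X -> _]eq_bigr do under eq_bigr do rewrite mulr1.
by rewrite /mass => <-; apply: eq_bigr => x _; apply: eq_bigr => y _; rewrite hT.
Qed.

Lemma KL_ST_ge0 : (0 <= KL pi S T)%E.
Proof.
rewrite KL_ST lee_fin.
apply: le_trans (klr_ge hpos S_ge0 T_ge0 (fun x y h => T_supp h)).
by rewrite massST subrr.
Qed.

Lemma KL_min : (KL pi S T <= KL pi S Q)%E.
Proof. by rewrite pyth leeDl // KL_TQ_ge0. Qed.

Lemma KL_uniq : KL pi S Q = KL pi S T -> forall x y, Q x y = T x y.
Proof.
rewrite pyth KL_ST; case: (boolP c2b) => hc.
  move: hc => /existsP[x0 /existsP[y0 /andP[h1 /eqP h2]]].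
  by rewrite (KL_inf pi h1 h2) addey.
rewrite (KL_fin pi (not_c2 hc)) -EFinD => [[h]].
have hk : klr pi T Q = 0 by apply: (addrI (klr pi S T)); rewrite addr0.
apply: (klr_eq0 hpos T_ge0 Q_ge0 (not_c2 hc)) => //.
by rewrite mT mQ.
Qed.

Lemma KL_Pi_le : (KL pi T Q <= KL pi S Q)%E.
Proof. by rewrite pyth leeDr // KL_ST_ge0. Qed.

End Core.

Section Orb.
Variables (R : realType) (X : finType) (pi : X -> R) (O : X -> {set X}).
Hypotheses (hpos : forall x, 0 < pi x) (Orefl : forall x, x \in O x)
  (Oeq : forall {x y}, y \in O x -> O y = O x).
Variable acc : X -> X -> R.
Hypotheses (acc_ge0 : forall x y, 0 <= acc x y) (acc_le1 : forall x y, acc x y <= 1)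
  (acc_sym : forall x y, pi x * acc x y = pi y * acc y x).
Local Notation G := (GibbsK pi O).
Local Notation K := (orbitK acc O).
Local Notation off := (orbit_off acc O).

Lemma off_ge0 x y : 0 <= off x y.
Proof.
rewrite /orbit_off; case: ifP => _ //.
by apply: mulr_ge0 => //; rewrite invr_ge0 ler0n.
Qed.

Lemma off_sum_le1 x : \sum_(z | z != x) off x z <= 1.
Proof.
set c := ((#|O x|.-1)%:R : R)^-1.
have hc : 0 <= c by rewrite invr_ge0 ler0n.
apply: (@le_trans _ _ (\sum_(z | z != x) (if z \in O x then c else 0))).
  apply: ler_sum => z hz; rewrite /orbit_off hz andbT.
  case: ifP => _ //; rewrite -[X in _ <= X]mulr1.
  by apply: ler_wpM2l.
rewrite -big_mkcondr /= sumr_const.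
have hcard : #|[pred z | (z != x) && (z \in O x)]| = #|O x|.-1.
  have := cardD1 x (O x); rewrite Orefl add1n => ->; rewrite -pred_Sn.
  by apply: eq_card => z; rewrite !inE.
rewrite hcard /c; case: (#|O x|.-1) => [|n]; first by rewrite mulr0n ler01.
by rewrite -[X in X <= _]mulr_natr mulVf // pnatr_eq0.
Qed.

Lemma K_ge0 x y : 0 <= K x y.
Proof.
rewrite /orbitK; case: ifP => _; last exact: off_ge0.
by rewrite subr_ge0 off_sum_le1.
Qed.

Lemma K_row x : \sum_y K x y = 1.
Proof.
rewrite (bigD1 x) //= {1}/orbitK eqxx.
rewrite (eq_bigr (fun y => off x y)); first by rewrite subrK.
by move=> y hy; rewrite /orbitK (negbTE hy).
Qed.

Lemma K_supp x y : K x y != 0 -> y \in O x.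
Proof.
rewrite /orbitK; case: ifP => [/eqP -> _|_]; first exact: Orefl.
by rewrite /orbit_off; case: ifP => [/andP[] //|_]; rewrite eqxx.
Qed.

Lemma off_sym x y : pi x * off x y = pi y * off y x.
Proof.
rewrite /orbit_off.
have -> : (x \in O y) && (x != y) = (y \in O x) && (y != x) by rewrite (Osym Orefl (@Oeq)) eq_sym.
case: ifP => hc; last by rewrite !mulr0.
have e : O y = O x by apply: Oeq; case/andP: hc.
by rewrite e mulrCA acc_sym mulrCA.
Qed.

Lemma K_stat y : \sum_x pi x * K x y = pi y.
Proof.
rewrite (bigD1 y) //= {1}/orbitK eqxx.
rewrite [X in _ + X](eq_bigr (fun x => pi y * off y x)).
  by rewrite -mulr_sumr -mulrDr subrK mulr1.
by move=> x hx; rewrite /orbitK eq_sym (negbTE hx) off_sym.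
Qed.

Lemma GK : kmul G K = G.
Proof.
apply: functional_extensionality => x; apply: functional_extensionality => y.
rewrite /kmul (eq_bigr (fun z => pi z * K z y *
   (if y \in O x then (pimass pi (O x))^-1 else 0))).
  rewrite -mulr_suml K_stat /GibbsK; case: ifP => _ //; by rewrite mulr0.
move=> z _; rewrite /GibbsK.
case: (boolP (z \in O x)) => hz; case: (boolP (y \in O x)) => hy.
- by rewrite mulrAC.
- have -> : K z y = 0.
    have [//|/K_supp hk] := eqVneq (K z y) 0.
    by rewrite -(Oeq hz) hk in hy.
  by rewrite !mulr0.
- have -> : K z y = 0.
    have [//|/K_supp hk] := eqVneq (K z y) 0.
    by rewrite -(Oeq hy) -(Osym Orefl (@Oeq)) hk in hz.
  by rewrite !mulr0 mul0r.
- by rewrite !mulr0 mul0r.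
Qed.

Lemma KG : kmul K G = G.
Proof.
apply: functional_extensionality => x; apply: functional_extensionality => y.
rewrite /kmul (eq_bigr (fun z => K x z * G x y)).
  by rewrite -mulr_suml K_row mul1r.
move=> z _; have [h|h] := eqVneq (K x z) 0; first by rewrite h !mul0r.
by rewrite (G_O pi (@Oeq) (K_supp h)).
Qed.

End Orb.

Lemma core_all (R : realType) (X : finType) (pi : X -> R) (O : X -> {set X})
  (hpos : forall x, 0 < pi x) (Orefl : forall x, x \in O x)
  (Oeq : forall x y, y \in O x -> O y = O x) (S T Q : X -> X -> R)
  (S_ge0 : forall x y, 0 <= S x y)
  (hT : forall x y, sandwich (GibbsK pi O) S x y = T x y)
  (Q_ge0 : forall x y, 0 <= Q x y)
  (hQ : forall x y, sandwich (GibbsK pi O) Q x y = Q x y)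
  (mT : mass pi T = 1) (mQ : mass pi Q = 1) :
  [/\ KL pi S Q = (KL pi S T + KL pi T Q)%E, (KL pi S T <= KL pi S Q)%E,
      (KL pi S Q = KL pi S T -> forall x y, Q x y = T x y) &
      (KL pi T Q <= KL pi S Q)%E].
Proof.
split.
- exact: (pyth hpos Orefl Oeq S_ge0 hT Q_ge0 hQ).
- exact: (KL_min hpos Orefl Oeq S_ge0 hT Q_ge0 hQ mT mQ).
- exact: (KL_uniq hpos Orefl Oeq S_ge0 hT Q_ge0 hQ mT mQ).
- exact: (KL_Pi_le hpos Orefl Oeq S_ge0 hT Q_ge0 hQ).
Qed.

Lemma mass_inS (R : realType) (X : finType) (pi : X -> R) (A : X -> X -> R) :
  \sum_x pi x = 1 -> in_S pi A -> mass pi A = 1.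
Proof.
move=> hs [[_ hrow] _]; rewrite /mass -[RHS]hs; apply: eq_bigr => x _.
by rewrite -mulr_sumr hrow mulr1.
Qed.

Lemma orbitK_facts (R : realType) (X : finType) (pi : X -> R) (O : X -> {set X})
  (hpos : forall x, 0 < pi x) (Orefl : forall x, x \in O x)
  (Oeq : forall x y, y \in O x -> O y = O x) (acc : X -> X -> R)
  (acc_ge0 : forall x y, 0 <= acc x y) (acc_le1 : forall x y, acc x y <= 1)
  (acc_sym : forall x y, pi x * acc x y = pi y * acc y x) (P : X -> X -> R) :
  (forall x y, 0 <= P x y) ->
  (forall x y, 0 <= sandwich (orbitK acc O) P x y) /\
  (forall x y, sandwich (GibbsK pi O) (sandwich (orbitK acc O) P) x y =
               sandwich (GibbsK pi O) P x y).
Proof.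
move=> hP; split.
  move=> x y; apply: kmul_ge0; last exact: K_ge0.
  by apply: kmul_ge0 => // a b; exact: K_ge0.
move=> x y; rewrite /sandwich.
set G := GibbsK pi O; set K := orbitK acc O.
have hGK : kmul G K = G by exact: (GK Orefl Oeq acc_sym).
have hKG : kmul K G = G by exact: (KG pi Orefl Oeq acc).
rewrite -kmulA -kmulA hGK. rewrite [kmul (kmul (kmul G P) K) G]kmulA. by rewrite hKG.
Qed.

Unset Implicit Arguments. Set Strict Implicit.

Theorem proposition5p3 (R : realType) (X : finType) (gT : finGroupType)
  (H : {group gT}) (to : {action gT &-> X}) (pi : X -> R)
  (hpos : forall x, 0 < pi x) (hsum : \sum_(x : X) pi x = 1)
  (P : X -> X -> R) (hP : in_S pi P) :
  let O := fun x : X => orbit to H x in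
  let G := GibbsK pi O in
  let M := MHK pi O in
  let B := BarkerK pi O in
  let GPG := sandwich G P in
  let MPM := sandwich M P in
  let BPB := sandwich B P in
  ((forall Q, in_boldG pi O Q ->
         KL pi P Q = (KL pi P GPG + KL pi GPG Q)%E) /\
      in_boldG pi O GPG /\
      (forall Q, in_boldG pi O Q -> (KL pi P GPG <= KL pi P Q)%E) /\
      (forall Q, in_boldG pi O Q -> KL pi P Q = KL pi P GPG ->
         forall x y, Q x y = GPG x y) /\
      (forall Q, in_boldG pi O Q ->
         KL pi MPM Q = (KL pi MPM GPG + KL pi GPG Q)%E) /\
      (forall Q, in_boldG pi O Q ->
         KL pi BPB Q = (KL pi BPB GPG + KL pi GPG Q)%E) /\
      (forall Q, in_boldG pi O Q -> (KL pi MPM GPG <= KL pi MPM Q)%E /\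
         (KL pi MPM Q = KL pi MPM GPG -> forall x y, Q x y = GPG x y)) /\
      (forall Q, in_boldG pi O Q -> (KL pi BPB GPG <= KL pi BPB Q)%E /\
         (KL pi BPB Q = KL pi BPB GPG -> forall x y, Q x y = GPG x y)) /\
      [/\ (KL pi GPG (PiK pi) <= KL pi P (PiK pi))%E,
          (KL pi GPG (PiK pi) <= KL pi MPM (PiK pi))%E &
          (KL pi GPG (PiK pi) <= KL pi BPB (PiK pi))%E]).
Proof.
move=> O G M B GPG MPM BPB.
have Orefl : forall x, x \in O x by move=> x; exact: orbit_refl.
have Oeq : forall x y, y \in O x -> O y = O x by move=> x y h; apply/orbit_eqP.
have hP' := hP; case: hP' => [[P_ge0 P_row] P_stat].
have Gge0 : forall x y, 0 <= G x y by exact: (G_ge0 hpos Orefl).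
have Grow : forall x, \sum_y G x y = 1 by exact: (G_row hpos Orefl).
have Gstat : forall y, \sum_x pi x * G x y = pi y by exact: (G_stat hpos Orefl Oeq).
have GG' : kmul G G = G by exact: (GG hpos Orefl Oeq).
have T_inS : in_S pi GPG.
  split; first split.
  - by apply: kmul_ge0 => //; apply: kmul_ge0.
  - by apply: kmul_row => //; apply: kmul_row.
  - by apply: kmul_stat => //; apply: kmul_stat.
have hGT : forall x y, sandwich G GPG x y = GPG x y.
  have e1 : kmul G (kmul (kmul G P) G) = kmul (kmul G P) G.
    by rewrite -kmulA -kmulA GG'.
  by move=> x y; rewrite /GPG /sandwich e1 kmulA GG'.
have T_bold : in_boldG pi O GPG by split.
have mT : mass pi GPG = 1 by exact: mass_inS.
have Qfacts : forall Q, in_boldG pi O Q -> [/\ forall x y, 0 <= Q x y,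
    forall x y, sandwich G Q x y = Q x y & mass pi Q = 1].
  move=> Q [hQS hQ]; split => //; last exact: mass_inS.
  by case: hQS => [[]].
have coreP : forall Q, in_boldG pi O Q -> _ :=
  fun Q hQ => let: And3 a b c := Qfacts Q hQ in
  core_all hpos Orefl Oeq P_ge0 (fun x y => erefl) a b mT c.
have [MPM_ge0 hMT] : (forall x y, 0 <= MPM x y) /\ (forall x y, sandwich G MPM x y = GPG x y).
  apply: (orbitK_facts hpos Orefl Oeq (acc := fun x y => Num.min 1 (pi y / pi x))) => //.
  - move=> x y; rewrite le_min ler01 /=; apply: divr_ge0; exact: ltW.
  - by move=> x y; rewrite ge_min lexx.
  - move=> x y; rewrite !minr_pMr ?ltW // !mulr1.
    rewrite mulrCA mulfV ?gt_eqF // mulr1.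
    by rewrite [pi y * (pi x / _)]mulrCA mulfV ?gt_eqF // mulr1 minC.
have [BPB_ge0 hBT] : (forall x y, 0 <= BPB x y) /\ (forall x y, sandwich G BPB x y = GPG x y).
  apply: (orbitK_facts hpos Orefl Oeq (acc := fun x y => pi y / (pi x + pi y))) => //.
  - move=> x y; apply: divr_ge0; first exact: ltW.
    by apply: addr_ge0; exact: ltW.
  - move=> x y; have hs : 0 < pi x + pi y by apply: addr_gt0.
    by rewrite ler_pdivrMr // mul1r lerDr ltW.
  - by move=> x y; rewrite [pi y + pi x]addrC mulrCA.
have coreM : forall Q, in_boldG pi O Q -> _ :=
  fun Q hQ => let: And3 a b c := Qfacts Q hQ in
  core_all hpos Orefl Oeq MPM_ge0 hMT a b mT c.
have coreB : forall Q, in_boldG pi O Q -> _ :=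
  fun Q hQ => let: And3 a b c := Qfacts Q hQ in
  core_all hpos Orefl Oeq BPB_ge0 hBT a b mT c.
have Pi_bold : in_boldG pi O (PiK pi).
  have hGPi : kmul G (PiK pi) = PiK pi.
    apply: functional_extensionality => x; apply: functional_extensionality => y.
    by rewrite /kmul /PiK -mulr_suml Grow mul1r.
  have hPiG : kmul (PiK pi) G = PiK pi.
    apply: functional_extensionality => x; apply: functional_extensionality => y.
    by rewrite /kmul /PiK Gstat.
  split; last by move=> x y; rewrite hGPi hPiG.
  split; first split.
  - by move=> x y; rewrite /PiK; exact: ltW.
  - by move=> x; rewrite /PiK hsum.
  - by move=> y; rewrite /PiK -mulr_suml hsum mul1r.
split; first by move=> Q hQ; case: (coreP Q hQ).
split; first exact: T_bold.
split; first by move=> Q hQ; case: (coreP Q hQ).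
split; first by move=> Q hQ; case: (coreP Q hQ).
split; first by move=> Q hQ; case: (coreM Q hQ).
split; first by move=> Q hQ; case: (coreB Q hQ).
split; first by move=> Q hQ; case: (coreM Q hQ).
split; first by move=> Q hQ; case: (coreB Q hQ).
split.
- by case: (coreP _ Pi_bold).
- by case: (coreM _ Pi_bold).
- by case: (coreB _ Pi_bold).
Qed.
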